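(* Let $T>0$, $\omega_p=\frac{\pi}{2T}$, $\omega_c>0$, $A_u>0$, $\tau\in\mathbb{R}$ and $\varphi_c\in\mathbb{R}$, and let $(\beta^I_m)_{m\in\mathbb{Z}},(\beta^Q_m)_{m\in\mathbb{Z}}$ be sequences in $\{-1,+1\}$. Define $$b_I(t)=\sum_{m=-\infty}^{\infty}\beta^I_m\,\Pi\!\left(\frac{t-2mT}{2T}\right),\qquad b_Q(t)=\sum_{m=-\infty}^{\infty}\beta^Q_m\,\Pi\!\left(\frac{t-(2m+1)T}{2T}\right),$$ where $\Pi(x)=1$ for $|x|<\tfrac12$, $\Pi(x)=\tfrac12$ for $|x|=\tfrac12$, $\Pi(x)=0$ for $|x|>\tfrac12$, and the interfering MSK signal $$u(t)=b_I(t-\tau)\cos\omega_p(t-\tau)\cos(\omega_c t+\varphi_c)+b_Q(t-\tau)\sin\omega_p(t-\tau)\sin(\omega_c t+\varphi_c).$$ Let $\phi_I(t)=\frac{2}{T}\cos\omega_p t\cos\omega_c t$, and for $k\in\mathbb{Z}$ let $$\Lambda^I_u(k)=\int_{(2k-1)T}^{(2k+1)T}\mathrm{LP}\big[A_u\,u(t)\,\phi_I(t)\big]\,dt,$$ where $\mathrm{LP}$ denotes ideal low-pass filtering that discards all components at carrier frequency $2\omega_c$ (i.e., after expanding the product by product-to-sum identities, all terms containing $\cos(2\omega_c t+\cdot)$ or $\sin(2\omega_c t+\cdot)$ are dropped). Set $\varphi_p=\omega_p\tau$, $k'=k-\lfloor \tau/2T\rfloor$, $\underline{\tau}=\tau-2\lfloor\tau/2T\rfloor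 T\in[0,2T)$, $k^{Q\prime}=k-\lfloor(\tau+T)/2T\rfloor$, and $\underline{\tau^Q}=\tau+T-2\lfloor(\tau+T)/2T\rfloor T\in[0,2T)$. Then $$\Lambda^I_u(k)=\frac{A_u}{2T}\Big\{\cos\varphi_c\Big[\cos\varphi_p\big(\underline{\tau}\,\beta^I_{k'-1}+(2T-\underline{\tau})\,\beta^I_{k'}\big)-\frac{2T}{\pi}\sin\varphi_p\big(\beta^I_{k'-1}-\beta^I_{k'}\big)\Big]$$ $$\qquad-\sin\varphi_c\Big[\sin\varphi_p\big(\underline{\tau^Q}\,\beta^Q_{k^{Q\prime}-1}+(2T-\underline{\tau^Q})\,\beta^Q_{k^{Q\prime}}\big)+\frac{2T}{\pi}\cos\varphi_p\big(\beta^Q_{k^{Q\prime}-1}-\beta^Q_{k^{Q\prime}}\big)\Big]\Big\}.$$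
   Context: This is the contribution of an interfering, minimum-shift-keying (MSK) modulated signal to the in-phase soft-bit decision variable of a matched-filter MSK demodulator synchronized to a different signal. $2T$ is the bit duration, $\omega_c$ the carrier angular frequency, $\tau$ the time offset of the interferer (positive means delayed), $\varphi_c$ its carrier phase offset, $A_u$ its received amplitude, and $\beta^I_m,\beta^Q_m$ its in-phase and quadrature information bits; the quadrature bit stream is staggered by $T$ relative to the in-phase one. *)

(* Defs.v *)
From Stdlib Require Import Reals Lra ZArith.
From Coquelicot Require Import Coquelicot.
Open Scope R_scope.

Definition rect (x : R) : R :=
  match Rlt_dec (Rabs x) (1/2) with
  | left _ => 1
  | right _ => if Req_EM_T (Rabs x) (1/2) then 1/2 else 0
  end.

Definition zsum (f : Z -> R) : R :=
  Series (fun n : nat => f (Z.of_nat n)) + Series (fun n : nat => f (- Z.of_nat (S n))%Z).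

Definition floorZ (x : R) : Z := Int_part x.

Definition bI (T : R) (betaI : Z -> R) (t : R) : R :=
  zsum (fun m => betaI m * rect ((t - 2 * IZR m * T) / (2 * T))).
Definition bQ (T : R) (betaQ : Z -> R) (t : R) : R :=
  zsum (fun m => betaQ m * rect ((t - (2 * IZR m + 1) * T) / (2 * T))).

Definition omega_p (T : R) : R := PI / (2 * T).

Definition msk_u (T wc tau phic : R) (betaI betaQ : Z -> R) (t : R) : R :=
  bI T betaI (t - tau) * cos (omega_p T * (t - tau)) * cos (wc * t + phic)
  + bQ T betaQ (t - tau) * sin (omega_p T * (t - tau)) * sin (wc * t + phic).

Definition phiI (T wc : R) (t : R) : R := 2 / T * cos (omega_p T * t) * cos (wc * t).

(* Product-to-sum expansion of Au * u(t) * phiI(t):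
   cos(wc t + phic) cos(wc t) = (cos phic + cos(2 wc t + phic))/2,
   sin(wc t + phic) cos(wc t) = (sin phic + sin(2 wc t + phic))/2.
   LP keeps the baseband part and discards the 2wc part. *)
Definition lp_part (T wc Au tau phic : R) (betaI betaQ : Z -> R) (t : R) : R :=
  Au * (2 / T) * cos (omega_p T * t) *
  (bI T betaI (t - tau) * cos (omega_p T * (t - tau)) * (cos phic / 2)
   + bQ T betaQ (t - tau) * sin (omega_p T * (t - tau)) * (sin phic / 2)).

Definition hf_part (T wc Au tau phic : R) (betaI betaQ : Z -> R) (t : R) : R :=
  Au * (2 / T) * cos (omega_p T * t) *
  (bI T betaI (t - tau) * cos (omega_p T * (t - tau)) * (cos (2 * wc * t + phic) / 2)
   + bQ T betaQ (t - tau) * sin (omega_p T * (t - tau)) * (sin (2 * wc * t + phic) / 2)).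

Lemma product_split T wc Au tau phic betaI betaQ t :
  Au * msk_u T wc tau phic betaI betaQ t * phiI T wc t
  = lp_part T wc Au tau phic betaI betaQ t + hf_part T wc Au tau phic betaI betaQ t.
Proof.
  unfold msk_u, phiI, lp_part, hf_part.
  assert (E2c : cos (2 * wc * t + phic) = cos (wc * t + phic) * cos (wc * t) - sin (wc * t + phic) * sin (wc * t)).
  { rewrite <- cos_plus. f_equal. ring. }
  assert (E2s : sin (2 * wc * t + phic) = sin (wc * t + phic) * cos (wc * t) + cos (wc * t + phic) * sin (wc * t)).
  { rewrite <- sin_plus. f_equal. ring. }
  assert (Ec : cos phic = cos (wc * t + phic) * cos (wc * t) + sin (wc * t + phic) * sin (wc * t)).
  { rewrite <- cos_minus. f_equal. ring. }
  assert (Es : sin phic = sin (wc * t + phic) * cos (wc * t) - cos (wc * t + phic) * sin (wc * t)).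
  { rewrite <- sin_minus. f_equal. ring. }
  rewrite E2c, E2s, Ec, Es.
  set (c := cos (wc * t + phic)) in *. set (s := sin (wc * t + phic)) in *.
  set (c0 := cos (wc * t)) in *. set (s0 := sin (wc * t)) in *.
  set (BI := bI T betaI (t - tau)). set (BQ := bQ T betaQ (t - tau)).
  set (a := cos (omega_p T * t)). set (ci := cos (omega_p T * (t - tau))).
  set (si := sin (omega_p T * (t - tau))).
  unfold Rdiv. replace (/ 2) with (1 * / 2) by ring. set (h := / 2). assert (Eh : h + h = 1) by (unfold h; lra). transitivity (Au * (BI * ci * c + BQ * si * s) * (2 * / T * a * c0) * (h + h)); [rewrite Eh; ring | ring].
Qed.

Definition LP_prod (T wc Au tau phic : R) (betaI betaQ : Z -> R) (t : R) : R :=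
  lp_part T wc Au tau phic betaI betaQ t.

Definition LambdaI (T wc Au tau phic : R) (betaI betaQ : Z -> R) (k : Z) : R :=
  RInt (LP_prod T wc Au tau phic betaI betaQ) ((2 * IZR k - 1) * T) ((2 * IZR k + 1) * T).

(* Main.v *)
Require Import Defs.
From Stdlib Require Import Reals Lra Lia ZArith.
From Coquelicot Require Import Coquelicot.
Open Scope R_scope.
Lemma is_series_head (x : R) : is_series (fun k : nat => match k with O => x | S _ => 0 end) x.
Proof.
  unfold is_series.
  apply filterlim_ext with (fun _ => x).
  - intro n. induction n. rewrite sum_O. reflexivity.
    rewrite sum_Sn, <- IHn. simpl. change (x = x + 0). ring.
  - apply filterlim_const.
Qed.
Lemma Series_single (a : nat -> R) (N : nat) :
  (forall n, n <> N -> a n = 0) -> Series a = a N.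
Proof.
  intros H. rewrite (Series_incr_n_aux a N).
  2:{ intros k Hk. apply H. lia. }
  rewrite <- (is_series_unique _ _ (is_series_head (a N))).
  apply Series_ext. intros [|n]. now rewrite Nat.add_0_r. apply H; lia.
Qed.
Lemma Series_zero (a : nat -> R) : (forall n, a n = 0) -> Series a = 0.
Proof. intros H. rewrite (Series_ext a (fun n => 0 * a n)). rewrite Series_scal_l. ring.
intro n; rewrite H; ring. Qed.

Lemma zsum_single (f : Z -> R) (j : Z) : (forall m, m <> j -> f m = 0) -> zsum f = f j.
Proof.
  intros H. unfold zsum. destruct (Z_le_gt_dec 0 j) as [Hj|Hj].
  - rewrite (Series_single _ (Z.to_nat j)).
    2:{ intros n Hn. apply H. lia. }
    rewrite (Series_zero (fun n => f (- Z.of_nat (S n))%Z)).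
    2:{ intros n. apply H. lia. }
    rewrite Z2Nat.id by lia. ring.
  - rewrite (Series_zero (fun n => f (Z.of_nat n))).
    2:{ intros n. apply H. lia. }
    rewrite (Series_single _ (Z.to_nat (- j - 1))).
    2:{ intros n Hn. apply H. lia. }
    replace (- Z.of_nat (S (Z.to_nat (- j - 1))))%Z with j by lia. ring.
Qed.

Lemma rect_in x : Rabs x < 1/2 -> rect x = 1.
Proof. intros H. unfold rect. destruct (Rlt_dec (Rabs x) (1/2)); [reflexivity|lra]. Qed.
Lemma rect_out x : Rabs x > 1/2 -> rect x = 0.
Proof. intros H. unfold rect. destruct (Rlt_dec (Rabs x) (1/2)); [lra|].
  destruct (Req_EM_T (Rabs x) (1/2)); [lra|reflexivity]. Qed.

Lemma abs_small T y : 0 < T -> -T < y < T -> Rabs (y / (2*T)) < 1/2.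
Proof. intros HT Hy. unfold Rdiv.
  assert (Hi : 0 < / (2*T)) by (apply Rinv_0_lt_compat; lra).
  assert (Hm : 2 * T * / (2*T) = 1) by (field; lra).
  apply Rabs_def1; nra. Qed.
Lemma abs_big T y : 0 < T -> (y < -T \/ T < y) -> Rabs (y / (2*T)) > 1/2.
Proof. intros HT Hy. unfold Rdiv.
  assert (Hi : 0 < / (2*T)) by (apply Rinv_0_lt_compat; lra).
  assert (Hm : 2 * T * / (2*T) = 1) by (field; lra).
  destruct Hy as [Hy|Hy].
  - rewrite Rabs_left; nra.
  - rewrite Rabs_right; nra. Qed.

Lemma bI_val T beta j x : 0 < T -> (2 * IZR j - 1) * T < x < (2 * IZR j + 1) * T ->
  bI T beta x = beta j.
Proof.
  intros HT Hx. unfold bI. rewrite (zsum_single _ j).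
  - rewrite rect_in. ring. apply abs_small; lra.
  - intros m Hm. rewrite rect_out. ring. apply abs_big; [lra|].
    destruct (Z_lt_ge_dec m j) as [H|H].
    + assert (IZR m <= IZR j - 1) by (rewrite <- minus_IZR; apply IZR_le; lia). right; nra.
    + assert (IZR m >= IZR j + 1) by (rewrite <- plus_IZR; apply IZR_ge; lia). left; nra.
Qed.

Lemma bQ_val T beta j x : 0 < T -> (2 * IZR j) * T < x < (2 * IZR j + 2) * T ->
  bQ T beta x = beta j.
Proof.
  intros HT Hx. unfold bQ. rewrite (zsum_single _ j).
  - rewrite rect_in. ring. apply abs_small; lra.
  - intros m Hm. rewrite rect_out. ring. apply abs_big; [lra|].
    destruct (Z_lt_ge_dec m j) as [H|H].
    + assert (IZR m <= IZR j - 1) by (rewrite <- minus_IZR; apply IZR_le; lia). right; nra.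
    + assert (IZR m >= IZR j + 1) by (rewrite <- plus_IZR; apply IZR_ge; lia). left; nra.
Qed.

Lemma intI (K w tau a c : R) : w <> 0 ->
  is_RInt (fun t => K * cos (w * t) * cos (w * (t - tau))) a c
    (K * (c * cos (w*tau) / 2 + sin (2*w*c - w*tau) / (4*w))
     - K * (a * cos (w*tau) / 2 + sin (2*w*a - w*tau) / (4*w))).
Proof.
  intros Hw.
  apply (is_RInt_derive (fun t => K * (t * cos (w*tau) / 2 + sin (2*w*t - w*tau) / (4*w)))).
  - intros t _. auto_derive; [auto|].
    assert (E1 : cos (2*w*t + - (w*tau)) = cos (w*t) * cos (w*t - w*tau) - sin (w*t) * sin (w*t - w*tau)).
    { rewrite <- cos_plus. f_equal. ring. }
    assert (E2 : cos (w*tau) = cos (w*t) * cos (w*t - w*tau) + sin (w*t) * sin (w*t - w*tau)).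
    { rewrite <- cos_minus. f_equal. ring. }
    replace (w * (t - tau)) with (w*t - w*tau) by ring.
    rewrite E1, E2. field. auto.
  - intros t _. apply (ex_derive_continuous (K:=R_AbsRing) (V:=R_NormedModule)). auto_derive. auto.
Qed.

Lemma intQ (K w tau a c : R) : w <> 0 ->
  is_RInt (fun t => K * cos (w * t) * sin (w * (t - tau))) a c
    (K * (- cos (2*w*c - w*tau) / (4*w) - c * sin (w*tau) / 2)
     - K * (- cos (2*w*a - w*tau) / (4*w) - a * sin (w*tau) / 2)).
Proof.
  intros Hw.
  apply (is_RInt_derive (fun t => K * (- cos (2*w*t - w*tau) / (4*w) - t * sin (w*tau) / 2))).
  - intros t _. auto_derive; [auto|].
    assert (E1 : sin (2*w*t + - (w*tau)) = sin (w*t - w*tau) * cos (w*t) + cos (w*t - w*tau) * sin (w*t)).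
    { rewrite <- sin_plus. f_equal. ring. }
    assert (E2 : sin (w*tau) = sin (w*t) * cos (w*t - w*tau) - cos (w*t) * sin (w*t - w*tau)).
    { rewrite <- sin_minus. f_equal. ring. }
    replace (w * (t - tau)) with (w*t - w*tau) by ring.
    rewrite E1, E2. field. auto.
  - intros t _. apply (ex_derive_continuous (K:=R_AbsRing) (V:=R_NormedModule)). auto_derive. auto.
Qed.

Lemma pieceI (K w tau a c : R) (f : R -> R) : w <> 0 ->
  (forall t, Rmin a c < t < Rmax a c -> f t = K * cos (w * t) * cos (w * (t - tau))) ->
  ex_RInt f a c /\ RInt f a c =
    K * (c * cos (w*tau) / 2 + sin (2*w*c - w*tau) / (4*w))
     - K * (a * cos (w*tau) / 2 + sin (2*w*a - w*tau) / (4*w)).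
Proof.
  intros Hw Hf. pose proof (intI K w tau a c Hw) as H. split.
  - eapply ex_RInt_ext. 2: eexists; exact H. intros t Ht. symmetry. now apply Hf.
  - rewrite (RInt_ext _ (fun t => K * cos (w * t) * cos (w * (t - tau)))) by exact Hf.
    now apply is_RInt_unique.
Qed.

Lemma pieceQ (K w tau a c : R) (f : R -> R) : w <> 0 ->
  (forall t, Rmin a c < t < Rmax a c -> f t = K * cos (w * t) * sin (w * (t - tau))) ->
  ex_RInt f a c /\ RInt f a c =
    K * (- cos (2*w*c - w*tau) / (4*w) - c * sin (w*tau) / 2)
     - K * (- cos (2*w*a - w*tau) / (4*w) - a * sin (w*tau) / 2).
Proof.
  intros Hw Hf. pose proof (intQ K w tau a c Hw) as H. split.
  - eapply ex_RInt_ext. 2: eexists; exact H. intros t Ht. symmetry. now apply Hf.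
  - rewrite (RInt_ext _ (fun t => K * cos (w * t) * sin (w * (t - tau)))) by exact Hf.
    now apply is_RInt_unique.
Qed.

Lemma sin_odd k : sin ((2 * IZR k - 1) * PI) = 0.
Proof. apply sin_eq_0_1. exists (2 * k - 1)%Z. rewrite minus_IZR, mult_IZR. reflexivity. Qed.
Lemma cos_odd k : cos ((2 * IZR k - 1) * PI) = -1.
Proof.
  replace ((2 * IZR k - 1) * PI) with (2 * (IZR k * PI) - PI) by ring.
  rewrite cos_minus, cos_2a_sin, sin_2a, cos_PI, sin_PI.
  rewrite (sin_eq_0_1 (IZR k * PI)) by (exists k; reflexivity). ring.
Qed.
Lemma trigI A B y : sin A = 0 -> cos A = -1 -> sin B = 0 -> sin (A + (y - B)) = - sin (B + y).
Proof. intros H1 H2 H3. rewrite sin_plus, sin_minus, sin_plus, H1, H2, H3. ring. Qed.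
Lemma trigQ A B y : sin A = 0 -> cos A = -1 -> sin B = 0 ->
  cos (A + ((y - B) + PI/2)) = cos ((B + y) - PI/2).
Proof. intros H1 H2 H3.
  rewrite cos_plus, cos_plus, sin_plus, cos_minus, cos_minus, sin_minus, cos_PI2, sin_PI2,
    sin_plus, cos_plus, H1, H2, H3. ring. Qed.
Lemma trig0s A x : sin A = 0 -> cos A = -1 -> sin (A - x) = sin x.
Proof. intros H1 H2. rewrite sin_minus, H1, H2. ring. Qed.
Lemma trig0c A x : sin A = 0 -> cos A = -1 -> cos (A - x) = - cos x.
Proof. intros H1 H2. rewrite cos_minus, H1, H2. ring. Qed.

Theorem theorem1 (T wc Au tau phic : R) (betaI betaQ : Z -> R) (k : Z) :
  0 < T -> 0 < wc -> 0 < Au ->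
  (forall m : Z, betaI m = 1 \/ betaI m = -1) ->
  (forall m : Z, betaQ m = 1 \/ betaQ m = -1) ->
  let phip := omega_p T * tau in
  let k' := (k - floorZ (tau / (2 * T)))%Z in
  let tau_u := tau - 2 * IZR (floorZ (tau / (2 * T))) * T in
  let kQ' := (k - floorZ ((tau + T) / (2 * T)))%Z in
  let tauQ_u := tau + T - 2 * IZR (floorZ ((tau + T) / (2 * T))) * T in
  LambdaI T wc Au tau phic betaI betaQ k =
  Au / (2 * T) *
  ( cos phic *
      ( cos phip * (tau_u * betaI (k' - 1)%Z + (2 * T - tau_u) * betaI k')
        - 2 * T / PI * sin phip * (betaI (k' - 1)%Z - betaI k') )
    - sin phic *
      ( sin phip * (tauQ_u * betaQ (kQ' - 1)%Z + (2 * T - tauQ_u) * betaQ kQ')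
        + 2 * T / PI * cos phip * (betaQ (kQ' - 1)%Z - betaQ kQ') ) ).
Proof.
  intros HT _ _ _ _. cbv zeta.
  set (n := floorZ (tau / (2 * T))). set (nQ := floorZ ((tau + T) / (2 * T))).
  assert (Hi : 0 < / (2*T)) by (apply Rinv_0_lt_compat; lra).
  assert (Hm : 2 * T * / (2*T) = 1) by (field; lra).
  assert (Hn : IZR n <= tau / (2*T) < IZR n + 1).
  { destruct (base_Int_part (tau / (2*T))). unfold n, floorZ. lra. }
  assert (HnQ : IZR nQ <= (tau + T) / (2*T) < IZR nQ + 1).
  { destruct (base_Int_part ((tau + T) / (2*T))). unfold nQ, floorZ. lra. }
  unfold Rdiv in Hn, HnQ.
  assert (Hu : 0 <= tau - 2 * IZR n * T < 2 * T).
  { assert (E : tau = tau * / (2*T) * (2*T)) by (field; lra). split; nra. }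
  assert (HuQ : 0 <= tau + T - 2 * IZR nQ * T < 2 * T).
  { assert (E : tau + T = (tau + T) * / (2*T) * (2*T)) by (field; lra). split; nra. }
  set (tu := tau - 2 * IZR n * T) in *. set (tQ := tau + T - 2 * IZR nQ * T) in *.
  set (w := omega_p T).
  assert (Hw : w <> 0).
  { unfold w, omega_p. assert (0 < PI) by apply PI_RGT_0. unfold Rdiv.
    apply Rmult_integral_contrapositive; split; [lra|]. apply Rinv_neq_0_compat; lra. }
  set (t0 := (2 * IZR k - 1) * T). set (t2 := (2 * IZR k + 1) * T).
  set (gI := fun t => Au * (2 / T) * cos (w * t) *
       (bI T betaI (t - tau) * cos (w * (t - tau)) * (cos phic / 2))).
  set (gQ := fun t => Au * (2 / T) * cos (w * t) *
       (bQ T betaQ (t - tau) * sin (w * (t - tau)) * (sin phic / 2))).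
  assert (E : LambdaI T wc Au tau phic betaI betaQ k = RInt (fun t => gI t + gQ t) t0 t2).
  { unfold LambdaI. apply (RInt_ext (V:=R_CompleteNormedModule)). intros t _. unfold LP_prod, lp_part, gI, gQ.
    fold w. simpl. ring. }
  rewrite E; clear E.
  destruct (pieceI (Au * (2/T) * betaI (k - n - 1)%Z * (cos phic / 2)) w tau t0 (t0 + tu) gI Hw)
    as [eI1 rI1].
  { intros t Ht. rewrite Rmin_left, Rmax_right in Ht by lra. unfold gI.
    rewrite (bI_val T betaI (k - n - 1)%Z); [ring|lra|].
    rewrite !minus_IZR. unfold t0, tu in *. lra. }
  destruct (pieceI (Au * (2/T) * betaI (k - n)%Z * (cos phic / 2)) w tau (t0 + tu) t2 gI Hw)
    as [eI2 rI2].
  { intros t Ht. rewrite Rmin_left, Rmax_right in Ht by (unfold t0, t2; lra). unfold gI.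
    rewrite (bI_val T betaI (k - n)%Z); [ring|lra|].
    rewrite !minus_IZR. unfold t0, t2, tu in *. lra. }
  destruct (pieceQ (Au * (2/T) * betaQ (k - nQ - 1)%Z * (sin phic / 2)) w tau t0 (t0 + tQ) gQ Hw)
    as [eQ1 rQ1].
  { intros t Ht. rewrite Rmin_left, Rmax_right in Ht by lra. unfold gQ.
    rewrite (bQ_val T betaQ (k - nQ - 1)%Z); [ring|lra|].
    rewrite !minus_IZR. unfold t0, tQ in *. lra. }
  destruct (pieceQ (Au * (2/T) * betaQ (k - nQ)%Z * (sin phic / 2)) w tau (t0 + tQ) t2 gQ Hw)
    as [eQ2 rQ2].
  { intros t Ht. rewrite Rmin_left, Rmax_right in Ht by (unfold t0, t2; lra). unfold gQ.
    rewrite (bQ_val T betaQ (k - nQ)%Z); [ring|lra|].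
    rewrite !minus_IZR. unfold t0, t2, tQ in *. lra. }
  assert (EP : RInt (fun t => gI t + gQ t) t0 t2 = RInt gI t0 t2 + RInt gQ t0 t2).
  { apply (RInt_plus (V:=R_CompleteNormedModule)); eapply ex_RInt_Chasles; eassumption. }
  rewrite EP; clear EP.
  rewrite <- (RInt_Chasles gI t0 (t0 + tu) t2 eI1 eI2).
  rewrite <- (RInt_Chasles gQ t0 (t0 + tQ) t2 eQ1 eQ2).
  rewrite rI1, rI2, rQ1, rQ2. clear rI1 rI2 rQ1 rQ2 eI1 eI2 eQ1 eQ2.
  assert (HPI : 0 < PI) by apply PI_RGT_0.
  assert (Ew : w = PI / (2 * T)) by reflexivity.
  set (A := (2 * IZR k - 1) * PI).
  assert (sA : sin A = 0) by apply sin_odd.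
  assert (cA : cos A = -1) by apply cos_odd.
  set (A2 := (2 * IZR (k + 1) - 1) * PI).
  assert (sA2 : sin A2 = 0) by apply sin_odd.
  assert (cA2 : cos A2 = -1) by apply cos_odd.
  set (B := IZR n * PI). assert (sB : sin B = 0) by (apply sin_eq_0_1; exists n; reflexivity).
  set (BQ := IZR nQ * PI). assert (sBQ : sin BQ = 0) by (apply sin_eq_0_1; exists nQ; reflexivity).
  assert (E0 : 2 * w * t0 - w * tau = A - w * tau).
  { unfold A, t0. rewrite Ew. field. lra. }
  assert (E2 : 2 * w * t2 - w * tau = A2 - w * tau).
  { unfold A2, t2. rewrite Ew, plus_IZR. field. lra. }
  assert (E1 : 2 * w * (t0 + tu) - w * tau = A + (w * tu - B)).
  { unfold A, t0, B, tu. rewrite Ew. field. lra. }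
  assert (Ep : w * tau = B + w * tu).
  { unfold B, tu. rewrite Ew. field. lra. }
  assert (E1Q : 2 * w * (t0 + tQ) - w * tau = A + ((w * tQ - BQ) + PI/2)).
  { unfold A, t0, BQ, tQ. rewrite Ew. field. lra. }
  assert (EpQ : w * tau = (BQ + w * tQ) - PI/2).
  { unfold BQ, tQ. rewrite Ew. field. lra. }
  rewrite E0, E2, E1, E1Q, (trig0s A), (trig0s A2), (trig0c A), (trig0c A2),
    (trigI A B), (trigQ A BQ), <- Ep, <- EpQ by assumption.
  unfold plus; simpl. unfold t0, t2. rewrite Ew. field. lra.
Qed.
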